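(* Let $g:[0,\infty)\to\mathbb{R}$ satisfy $g(1)=0$ and $g(1/2)=1/2$, and suppose that the function $\hat H(a_1,\ldots,a_n)=g(a_1)+\cdots+g(a_n)-g(a_1+\cdots+a_n)$, defined on finite sequences of nonnegative reals with positive sum, is homogeneous (i.e. $\hat H(ca)=c\hat H(a)$ for all $c>0$) and continuous (for each $n$, as a function of $(a_1,\ldots,a_n)$). Then $g(a)=a\log_2(1/a)$ for every rational $a>0$.
   Context: All logarithms are to base $2$. *)

(* Defs.v *)
From Stdlib Require Import Reals.
Open Scope R_scope.

Fixpoint psum (a : nat -> R) (n : nat) : R :=
  match n with
  | O => 0
  | S m => psum a m + a m
  end.

Definition log2 (x : R) : R := ln x / ln 2.

Definition in_dom (n : nat) (a : nat -> R) : Prop :=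
  (forall i, (i < n)%nat -> 0 <= a i) /\ 0 < psum a n.

(* H-hat(a_1,...,a_n) = g(a_1)+...+g(a_n) - g(a_1+...+a_n),
   the tuple being (a 0, ..., a (n-1)). *)
Definition Hhat (g : R -> R) (n : nat) (a : nat -> R) : R :=
  psum (fun i => g (a i)) n - g (psum a n).

(* Main.v *)
Require Import Defs.
From Stdlib Require Import Reals Lra Lia.
Open Scope R_scope.

Lemma ln_le_sub1 x : 0 < x -> ln x <= x - 1.
Proof. intros H. pose proof (exp_ineq1_le (ln x)). rewrite exp_ln in H0; lra. Qed.

Lemma bound_fin (r : nat -> R) (K : nat) : exists M, 0 <= M /\ forall n, (n <= K)%nat -> Rabs (r n) <= M.
Proof.
  induction K as [|K [M [HM0 HM]]].
  - exists (Rabs (r 0%nat)). split; [apply Rabs_pos|]. intros n Hn. replace n with 0%nat by lia. lra.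
  - exists (Rmax M (Rabs (r (S K)))). split. { eapply Rle_trans; [exact HM0| apply Rmax_l]. }
    intros n Hn. destruct (Nat.eq_dec n (S K)) as [->|Hne]. apply Rmax_r.
    eapply Rle_trans; [apply HM; lia| apply Rmax_l].
Qed.

Lemma odd_step (x y J eta : R) : 0 < J -> 0 <= eta ->
  Rabs ((J + 1) * x - J * y) <= eta * J -> Rabs x <= Rabs y + eta.
Proof.
  intros HJ He H.
  assert (H1 : Rabs ((J+1) * x) <= Rabs ((J + 1) * x - J * y) + Rabs (J * y)).
  { replace ((J+1)*x) with (((J + 1) * x - J * y) + J * y) at 1 by ring. apply Rabs_triang. }
  rewrite !Rabs_mult in H1. rewrite (Rabs_right (J+1)) in H1 by lra. rewrite (Rabs_right J) in H1 by lra.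
  assert ((J+1) * Rabs x <= (J+1) * (Rabs y + eta)). { pose proof (Rabs_pos y). nra. }
  apply Rmult_le_reg_l in H0; lra.
Qed.

Lemma zero_lemma (r : nat -> R)
  (R1 : forall m n, (1 <= m)%nat -> (1 <= n)%nat -> r (m * n)%nat = r m + r n)
  (R2 : r 2%nat = 0)
  (R4 : forall eta, 0 < eta -> exists N, forall j, (N <= j)%nat -> (1 <= j)%nat ->
        Rabs (INR (j + 1) * r (j + 1)%nat - INR j * r j) <= eta * INR j) :
  forall p, (1 <= p)%nat -> r p = 0.
Proof.
  intros p Hp.
  destruct (Req_dec (r p) 0) as [|Hne]; [assumption|exfalso].
  set (a := Rabs (r p)).
  assert (Ha : 0 < a) by (apply Rabs_pos_lt; exact Hne).
  assert (HpR : 0 < INR p) by (apply lt_0_INR; lia).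
  set (eta := a / (2 * INR p)).
  assert (Heta : 0 < eta) by (unfold eta; apply Rdiv_lt_0_compat; lra).
  destruct (R4 eta Heta) as [N HN].
  set (K := (2 * N + 2)%nat).
  destruct (bound_fin r K) as [M [HM0 HM]].
  assert (Claim : forall k n, (1 <= n)%nat -> (n <= K * 2 ^ k)%nat -> Rabs (r n) <= M + eta * INR k).
  { induction k as [|k IH]; intros n Hn1 Hn2.
    - simpl. rewrite Rmult_0_r, Rplus_0_r. apply HM. simpl in Hn2; lia.
    - rewrite S_INR.
      destruct (Compare_dec.le_lt_dec n K) as [HnK|HnK].
      + pose proof (HM n HnK). pose proof (pos_INR k). nra.
      + rewrite Nat.pow_succ_r' in Hn2.
        pose proof (Nat.div_mod n 2 ltac:(lia)) as Hdm.
        pose proof (Nat.mod_upper_bound n 2 ltac:(lia)) as Hmb.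
        set (m := (n / 2)%nat) in *.
        assert (Hm1 : (1 <= m)%nat) by (unfold K in HnK; lia).
        assert (HmK : (m <= K * 2 ^ k)%nat) by nia.
        assert (HmN : (N <= 2 * m)%nat) by (unfold K in HnK; lia).
        assert (Hr2m : r (2 * m)%nat = r m) by (rewrite R1 by lia; rewrite R2; ring).
        destruct (n mod 2) as [|[|z]] eqn:Hmod; [| |lia].
        * rewrite Nat.add_0_r in Hdm. rewrite Hdm, Hr2m. pose proof (IH m Hm1 HmK). lra.
        * rewrite Hdm. pose proof (HN (2 * m)%nat HmN ltac:(lia)) as Hj.
          rewrite Hr2m in Hj. rewrite plus_INR in Hj. simpl (INR 1) in Hj.
          assert (0 < INR (2 * m)) by (apply lt_0_INR; lia).
          pose proof (odd_step _ _ _ _ H (Rlt_le _ _ Heta) Hj).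
          pose proof (IH m Hm1 HmK). lra. }
  assert (Hpow : forall k, r (p ^ k)%nat = INR k * r p).
  { induction k. simpl. 
    assert (r 1%nat = 0). { pose proof (R1 1%nat 1%nat ltac:(lia) ltac:(lia)). simpl in H. lra. }
    lra.
    assert (Hk1 : (1 <= p ^ k)%nat) by (pose proof (Nat.pow_nonzero p k); lia).
    rewrite Nat.pow_succ_r', R1, IHk, S_INR by lia. ring. }
  destruct (INR_archimed a (2 * M) Ha) as [k Hk].
  assert (Hle : (p ^ k <= K * 2 ^ (p * k))%nat).
  { assert (p ^ k <= 2 ^ (p * k))%nat.
    { rewrite Nat.pow_mul_r. apply Nat.pow_le_mono_l. apply Nat.lt_le_incl, Nat.pow_gt_lin_r. lia. }
    unfold K. nia. }
  assert (H1 : (1 <= p ^ k)%nat) by (pose proof (Nat.pow_nonzero p k); lia).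
  pose proof (Claim (p * k)%nat (p ^ k)%nat H1 Hle) as HC.
  rewrite Hpow, Rabs_mult, Rabs_right in HC by (apply Rle_ge, pos_INR).
  fold a in HC. rewrite mult_INR in HC. unfold eta in HC.
  replace (a / (2 * INR p) * (INR p * INR k)) with (INR k * a / 2) in HC by (field; lra).
  lra.
Qed.

Definition HOM (g : R -> R) := forall (n : nat) (a : nat -> R) (c : R), in_dom n a -> 0 < c ->
            Hhat g n (fun i => c * a i) = c * Hhat g n a.

Lemma E2 g (hhom : HOM g) a b c : 0 <= a -> 0 <= b -> 0 < a + b -> 0 < c ->
  g (c * a) + g (c * b) - g (c * (a + b)) = c * (g a + g b - g (a + b)).
Proof.
  intros Ha Hb Hab Hc.
  set (s := fun i : nat => match i with O => a | _ => b end).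
  assert (Hd : in_dom 2 s).
  { split. intros i Hi. destruct i as [|i]; simpl; lra. simpl. lra. }
  pose proof (hhom 2%nat s c Hd Hc) as H. unfold Hhat in H. simpl in H.
  replace (0 + c * a + c * b) with (c * (a + b)) in H by ring.
  replace (0 + a + b) with (a + b) in H by ring. lra.
Qed.

Lemma G0 g (hhom : HOM g) : g 0 = 0.
Proof.
  pose proof (E2 g hhom 1 0 2 ltac:(lra) ltac:(lra) ltac:(lra) ltac:(lra)) as H.
  rewrite Rmult_0_r, Rplus_0_r in H. lra.
Qed.

Lemma P1 g (hhom : HOM g) (hg1 : g 1 = 0) c n : 0 < c ->
  g (c * INR n) = c * g (INR n) + INR n * g c.
Proof.
  intros Hc. induction n.
  - simpl. rewrite Rmult_0_r, (G0 g hhom). ring.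
  - rewrite S_INR. pose proof (pos_INR n).
    pose proof (E2 g hhom (INR n) 1 c H ltac:(lra) ltac:(lra) Hc) as HE.
    rewrite Rmult_1_r, hg1 in HE. lra.
Qed.

Lemma ginv g (hhom : HOM g) (hg1 : g 1 = 0) q : (1 <= q)%nat ->
  g (/ INR q) = - g (INR q) / (INR q * INR q).
Proof.
  intros Hq. assert (0 < INR q) by (apply lt_0_INR; lia).
  pose proof (P1 g hhom hg1 (/ INR q) q ltac:(apply Rinv_0_lt_compat; lra)) as H1.
  rewrite Rinv_l, hg1 in H1 by lra. field_simplify; [|lra]. 
  apply (Rmult_eq_reg_l (INR q)); [|lra]. field_simplify; lra.
Qed.

Theorem mainTheorem4 (g : R -> R)
  (hg1 : g 1 = 0)
  (hghalf : g (1/2) = 1/2)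
  (hhom : forall (n : nat) (a : nat -> R) (c : R), in_dom n a -> 0 < c ->
            Hhat g n (fun i => c * a i) = c * Hhat g n a)
  (hcont : forall (n : nat) (a : nat -> R), in_dom n a ->
            forall eps, 0 < eps -> exists delta, 0 < delta /\
              forall b : nat -> R, in_dom n b ->
                (forall i, (i < n)%nat -> Rabs (b i - a i) < delta) ->
                Rabs (Hhat g n b - Hhat g n a) < eps) :
  forall p q : nat, (0 < p)%nat -> (0 < q)%nat ->
    let a := INR p / INR q in g a = a * log2 (1 / a).
Proof.
  intros p q hp hq a.
  assert (hh : HOM g) by exact hhom.
  assert (Hln2 : / 2 < ln 2) by exact ln_lt_2.
  set (r := fun n : nat => g (INR n) / INR n + log2 (INR n)).
  assert (Hr : forall n, (1 <= n)%nat -> r n = 0).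
  { apply zero_lemma.
    - intros m n Hm Hn. unfold r.
      assert (0 < INR m) by (apply lt_0_INR; lia).
      assert (0 < INR n) by (apply lt_0_INR; lia).
      rewrite mult_INR, (P1 g hh hg1 (INR m) n) by lra. unfold log2. rewrite ln_mult by lra.
      field. lra.
    - unfold r. replace (INR 2) with 2 by (simpl; lra).
      pose proof (P1 g hh hg1 (/2) 2 ltac:(lra)) as H. replace (INR 2) with 2 in H by (simpl; lra).
      replace (/2 * 2) with 1 in H by field. replace (/2) with (1/2) in H by field.
      rewrite hg1, hghalf in H. unfold log2. replace (g 2) with (-2) by lra. field. lra.
    - intros eta Heta.
      set (a0 := fun i : nat => match i with O => 1 | _ => 0 end).
      assert (Ha0 : in_dom 2 a0).
      { split. intros i Hi. destruct i as [|i]; simpl; lra. simpl. lra. }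
      destruct (hcont 2%nat a0 Ha0 (eta/2) ltac:(lra)) as [d [Hd Hc]].
      destruct (archimed_cor1 d Hd) as [N1 [HN1 HN1p]].
      set (T := 9 / eta + eta + 1).
      destruct (INR_archimed 1 (T*T) Rlt_0_1) as [N2 HN2].
      exists (N1 + N2)%nat. intros j Hj Hj1.
      set (x := INR j).
      assert (Hx1 : 1 <= x) by (unfold x; apply (le_INR 1); lia).
      assert (HxN1 : INR N1 <= x) by (unfold x; apply le_INR; lia).
      assert (HxN2 : INR N2 <= x) by (unfold x; apply le_INR; lia).
      assert (HN1R : 0 < INR N1) by (apply lt_0_INR; lia).
      assert (Hinvx : / x < d).
      { eapply Rle_lt_trans; [|exact HN1]. apply Rinv_le_contravar; lra. }
      set (b := fun i : nat => match i with O => 1 | _ => / x end).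
      assert (Hb : in_dom 2 b).
      { split. intros i Hi. destruct i as [|i]; simpl. lra.
        left; apply Rinv_0_lt_compat; lra. simpl. pose proof (Rinv_0_lt_compat x). lra. }
      assert (Hcl := Hc b Hb).
      assert (Hdist : forall i, (i < 2)%nat -> Rabs (b i - a0 i) < d).
      { intros i Hi. destruct i as [|[|i]]; simpl.
        - rewrite Rminus_diag, Rabs_R0. lra.
        - rewrite Rminus_0_r, Rabs_right. lra. left; apply Rinv_0_lt_compat; lra.
        - lia. }
      specialize (Hcl Hdist). unfold Hhat in Hcl. simpl in Hcl.
      replace (0 + 1 + 0) with 1 in Hcl by ring. rewrite (G0 g hh), hg1 in Hcl.
      replace (0 + 1 + / x) with (/ x * INR (j + 1)) in Hcl by (rewrite plus_INR; simpl; fold x; field; lra).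
      rewrite (P1 g hh hg1) in Hcl by (apply Rinv_0_lt_compat; lra).
      unfold x in Hcl. rewrite (ginv g hh hg1 j Hj1) in Hcl. fold x in Hcl.
      rewrite plus_INR in Hcl. simpl (INR 1) in Hcl. fold x in Hcl.
      set (gj := g x) in Hcl |- *. set (gj1 := g (x + 1)) in Hcl |- *.
      
      assert (HD : Rabs (gj - gj1) < eta / 2 * x).
      { replace (gj - gj1) with (x * (0 + 0 + - gj / (x * x) - (/ x * gj1 + (x + 1) * (- gj / (x * x)))
               - (0 + 0 + 0 - 0))) by (field; lra).
        rewrite Rabs_mult, (Rabs_right x) by lra. rewrite Rmult_comm. apply Rmult_lt_compat_r; lra. }
      unfold r. rewrite plus_INR. simpl (INR 1). fold x. fold gj1. fold gj.
      set (l := ln ((x + 1) / x)).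
      assert (Hlx : ln (x + 1) = ln x + l).
      { unfold l. rewrite <- ln_mult by (try apply Rdiv_lt_0_compat; lra). f_equal. field. lra. }
      assert (Hl0 : 0 <= l).
      { unfold l. rewrite <- ln_1. left. apply ln_increasing. lra.
        apply (Rmult_lt_reg_r x); [lra|]. field_simplify; lra. }
      assert (Hl1 : x * l <= 1).
      { pose proof (ln_le_sub1 ((x+1)/x) ltac:(apply Rdiv_lt_0_compat; lra)). fold l in H.
        replace ((x + 1) / x - 1) with (/ x) in H by (field; lra).
        apply (Rmult_le_compat_l x) in H; [|lra]. rewrite Rinv_r in H; lra. }
      assert (Hlnx : 0 <= ln x).
      { pose proof (ln_le_sub1 (/ x) ltac:(apply Rinv_0_lt_compat; lra)). rewrite ln_Rinv in H by lra.
        assert (/ x <= 1). { rewrite <- Rinv_1. apply Rinv_le_contravar; lra. } lra. }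
      set (num := (x + 1) * ln (x + 1) - x * ln x).
      assert (Hnum : 0 <= num <= ln (x + 1) + 1) by (unfold num; rewrite Hlx; nra).
      set (L := num / ln 2).
      assert (HL : 0 <= L <= 2 * (ln (x + 1) + 1)).
      { assert (L * ln 2 = num) by (unfold L; field; lra). nra. }
      set (s := sqrt (x + 1)).
      assert (Hss : s * s = x + 1) by (unfold s; apply sqrt_sqrt; lra).
      assert (HsT : T <= s).
      { unfold s. rewrite <- (sqrt_square T) by (unfold T; pose proof (Rdiv_lt_0_compat 9 eta ltac:(lra) Heta); lra).
        apply sqrt_le_1_alt. lra. }
      assert (Hs0 : 0 < s) by (unfold T in HsT; pose proof (Rdiv_lt_0_compat 9 eta ltac:(lra) Heta); lra).
      assert (Hlns : ln (x + 1) <= 2 * (s - 1)).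
      { rewrite <- Hss, ln_mult by lra. pose proof (ln_le_sub1 s Hs0). lra. }
      assert (Hes : 9 <= eta * s).
      { unfold T in HsT. assert (eta * (9 / eta) = 9) by (field; lra). nra. }
      assert (Hse : eta <= s) by (unfold T in HsT; pose proof (Rdiv_lt_0_compat 9 eta ltac:(lra) Heta); lra).
      assert (Hgrow : ln (x + 1) + 1 <= eta * x / 4) by nra.
      replace ((x + 1) * (gj1 / (x + 1) + log2 (x + 1)) - x * (gj / x + log2 x))
        with (- (gj - gj1) + L) by (unfold L, num, log2; field; lra).
      eapply Rle_trans; [apply Rabs_triang|]. rewrite Rabs_Ropp, (Rabs_right L) by lra. lra. }
  assert (Hg : forall n, (1 <= n)%nat -> g (INR n) = - INR n * log2 (INR n)).
  { intros n Hn. pose proof (Hr n Hn). unfold r in H. assert (0 < INR n) by (apply lt_0_INR; lia).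
    apply (Rmult_eq_compat_l (INR n)) in H. field_simplify in H; lra. }
  assert (HpR : 0 < INR p) by (apply lt_0_INR; lia).
  assert (HqR : 0 < INR q) by (apply lt_0_INR; lia).
  unfold a. replace (INR p / INR q) with (/ INR q * INR p) by (field; lra).
  rewrite (P1 g hh hg1) by (apply Rinv_0_lt_compat; lra).
  rewrite (ginv g hh hg1 q) by lia. rewrite !Hg by lia.
  replace (1 / (/ INR q * INR p)) with (INR q * / INR p) by (field; lra).
  unfold log2. rewrite ln_mult, ln_Rinv by (try apply Rinv_0_lt_compat; lra).
  field. lra.
Qed.
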